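(* Let $\mathsf{RCA}_0+B\Sigma^0_2$ be the base theory. Then $B\Sigma^0_3$ is equivalent to the following statement: for every $u\in\mathbb{N}$ and every function $h:u\times\mathbb{N}\to\mathbb{N}$ such that for every $x<u$ there is $m$ with $h(x,z)<m$ for infinitely many $z$, there is $M\in\mathbb{N}$ such that for every $x<u$, $h(x,z)<M$ for infinitely many $z$.
   Context: $\mathbb{N}$ denotes the first-order universe of a model of second-order arithmetic; $h$ ranges over functions (sets) of the model. $B\Sigma^0_n$ is the $\Sigma^0_n$ bounding (collection) scheme. *)

(* Defs.v *)
From Stdlib Require Import Arith.

Record L2model := {
  num : Type;
  set : Type;
  zero : num;
  one : num;
  add : num -> num -> num;
  mul : num -> num -> num;
  lt : num -> num -> Prop;
  mem : num -> set -> Prop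
}.

(* Number terms; variables are de Bruijn indices into the number environment. *)
Inductive term : Type :=
| tvar : nat -> term
| tzero : term
| tone : term
| tadd : term -> term -> term
| tmul : term -> term -> term.

(* Number and set variables are de Bruijn indices into two
   separate environments.  [fball t f] is (forall x < t, f) and [fbex t f] is
   (exists x < t, f), where t is read in the outer context and x is index 0 in f. *)
Inductive form : Type :=
| feq : term -> term -> form
| flt : term -> term -> form
| fmem : term -> nat -> form
| fnot : form -> form
| fand : form -> form -> form
| f_or : form -> form -> form
| fimp : form -> form -> form
| fall : form -> form
| fex : form -> form
| fball : term -> form -> form
| fbex : term -> form -> form
| fSall : form -> form
| fSex : form -> form.

Definition scons {A : Type} (a : A) (e : nat -> A) : nat -> A :=
  fun n => match n with 0 => a | S k => e k end.

Fixpoint evalt (M : L2model) (rho : nat -> num M) (t : term) : num M :=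
  match t with
  | tvar n => rho n
  | tzero => zero M
  | tone => one M
  | tadd a b => add M (evalt M rho a) (evalt M rho b)
  | tmul a b => mul M (evalt M rho a) (evalt M rho b)
  end.

Fixpoint sat (M : L2model) (rho : nat -> num M) (sg : nat -> set M) (f : form)
  : Prop :=
  match f with
  | feq a b => evalt M rho a = evalt M rho b
  | flt a b => lt M (evalt M rho a) (evalt M rho b)
  | fmem a X => mem M (evalt M rho a) (sg X)
  | fnot g => ~ sat M rho sg g
  | fand g h => sat M rho sg g /\ sat M rho sg h
  | f_or g h => sat M rho sg g \/ sat M rho sg h
  | fimp g h => sat M rho sg g -> sat M rho sg h
  | fall g => forall n, sat M (scons n rho) sg g
  | fex g => exists n, sat M (scons n rho) sg g
  | fball t g => forall n, lt M n (evalt M rho t) -> sat M (scons n rho) sg g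
  | fbex t g => exists n, lt M n (evalt M rho t) /\ sat M (scons n rho) sg g
  | fSall g => forall X, sat M rho (scons X sg) g
  | fSex g => exists X, sat M rho (scons X sg) g
  end.

Inductive bounded : form -> Prop :=
| b_eq a b : bounded (feq a b)
| b_lt a b : bounded (flt a b)
| b_mem a X : bounded (fmem a X)
| b_not g : bounded g -> bounded (fnot g)
| b_and g h : bounded g -> bounded h -> bounded (fand g h)
| b_or g h : bounded g -> bounded h -> bounded (f_or g h)
| b_imp g h : bounded g -> bounded h -> bounded (fimp g h)
| b_ball t g : bounded g -> bounded (fball t g)
| b_bex t g : bounded g -> bounded (fbex t g).

Inductive Sigma : nat -> form -> Prop :=
| Sigma_0 f : bounded f -> Sigma 0 f
| Sigma_ex n f : Sigma (S n) f -> Sigma (S n) (fex f)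
| Sigma_Pi n f : Pi n f -> Sigma (S n) f
with Pi : nat -> form -> Prop :=
| Pi_0 f : bounded f -> Pi 0 f
| Pi_all n f : Pi (S n) f -> Pi (S n) (fall f)
| Pi_Sigma n f : Sigma n f -> Pi (S n) f.

(* Basic axioms of first-order arithmetic (Simpson, SOSOA I.2.4 (i)). *)
Definition basic_axioms (M : L2model) : Prop :=
  (forall m : num M, add M m (one M) <> zero M) /\
  (forall m n : num M, add M m (one M) = add M n (one M) -> m = n) /\
  (forall m : num M, add M m (zero M) = m) /\
  (forall m n : num M, add M m (add M n (one M)) = add M (add M m n) (one M)) /\
  (forall m : num M, mul M m (zero M) = zero M) /\
  (forall m n : num M, mul M m (add M n (one M)) = add M (mul M m n) m) /\
  (forall m : num M, ~ lt M m (zero M)) /\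
  (forall m n : num M, lt M m (add M n (one M)) <-> (lt M m n \/ m = n)).

Definition Sigma1_IND (M : L2model) : Prop :=
  forall f, Sigma 1 f -> forall rho sg,
    sat M (scons (zero M) rho) sg f ->
    (forall n, sat M (scons n rho) sg f -> sat M (scons (add M n (one M)) rho) sg f) ->
    forall n, sat M (scons n rho) sg f.

Definition Delta1_CA (M : L2model) : Prop :=
  forall f g, Sigma 1 f -> Pi 1 g -> forall rho sg,
    (forall n, sat M (scons n rho) sg f <-> sat M (scons n rho) sg g) ->
    exists X : set M, forall n, mem M n X <-> sat M (scons n rho) sg f.

Definition RCA0 (M : L2model) : Prop :=
  basic_axioms M /\ Sigma1_IND M /\ Delta1_CA M.

(* B Sigma^0_k: forall a, (forall i < a, exists j, phi(i,j)) ->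
   exists b, forall i < a, exists j < b, phi(i,j), for phi in Sigma^0_k
   (variable 0 = j, variable 1 = i, higher indices = parameters). *)
Definition BSigma (k : nat) (M : L2model) : Prop :=
  forall f, Sigma k f -> forall rho sg (a : num M),
    (forall i, lt M i a -> exists j, sat M (scons j (scons i rho)) sg f) ->
    exists b, forall i, lt M i a ->
      exists j, lt M j b /\ sat M (scons j (scons i rho)) sg f.

Definition pairM (M : L2model) (a b : num M) : num M :=
  add M (mul M (add M a b) (add M a b)) a.

(* H codes a function h : u x N -> N  (a set of pairs ((x,z),y)). *)
Definition is_fun2 (M : L2model) (u : num M) (H : set M) : Prop :=
  (forall w, mem M w H -> exists x z y, w = pairM M (pairM M x z) y /\ lt M x u) /\
  (forall x z, lt M x u -> exists y, mem M (pairM M (pairM M x z) y) H /\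
     forall y', mem M (pairM M (pairM M x z) y') H -> y' = y).

Definition val_lt (M : L2model) (H : set M) (x z m : num M) : Prop :=
  exists y, mem M (pairM M (pairM M x z) y) H /\ lt M y m.

Definition inf_often_lt (M : L2model) (H : set M) (x m : num M) : Prop :=
  forall k, exists z, lt M k z /\ val_lt M H x z m.

Definition uniform_bound_principle (M : L2model) : Prop :=
  forall (u : num M) (H : set M), is_fun2 M u H ->
    (forall x, lt M x u -> exists m, inf_often_lt M H x m) ->
    exists Mb, forall x, lt M x u -> inf_often_lt M H x Mb.

(* Main.v *)
Require Import Defs.
From Stdlib Require Import Arith Lia Classical FunctionalExtensionality Setoid Morphisms.


Fixpoint rent (xi : nat -> nat) (t : term) : term :=
  match t with
  | tvar n => tvar (xi n)
  | tzero => tzero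
  | tone => tone
  | tadd a b => tadd (rent xi a) (rent xi b)
  | tmul a b => tmul (rent xi a) (rent xi b)
  end.

Definition up (xi : nat -> nat) : nat -> nat :=
  fun n => match n with 0 => 0 | S k => S (xi k) end.

Fixpoint renf (xi : nat -> nat) (f : form) : form :=
  match f with
  | feq a b => feq (rent xi a) (rent xi b)
  | flt a b => flt (rent xi a) (rent xi b)
  | fmem a X => fmem (rent xi a) X
  | fnot g => fnot (renf xi g)
  | fand g h => fand (renf xi g) (renf xi h)
  | f_or g h => f_or (renf xi g) (renf xi h)
  | fimp g h => fimp (renf xi g) (renf xi h)
  | fall g => fall (renf (up xi) g)
  | fex g => fex (renf (up xi) g)
  | fball t g => fball (rent xi t) (renf (up xi) g)
  | fbex t g => fbex (rent xi t) (renf (up xi) g)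
  | fSall g => fSall (renf xi g)
  | fSex g => fSex (renf xi g)
  end.

Lemma evalt_ren M rho xi t : evalt M rho (rent xi t) = evalt M (fun n => rho (xi n)) t.
Proof. induction t; simpl; congruence. Qed.

Lemma scons_up {A} (x : A) rho xi :
  (fun n => scons x rho (up xi n)) = scons x (fun n => rho (xi n)).
Proof. extensionality n; destruct n; reflexivity. Qed.

Lemma sat_ren M f : forall xi rho sg,
  sat M rho sg (renf xi f) <-> sat M (fun n => rho (xi n)) sg f.
Proof.
  induction f; intros xi rho sg; simpl; rewrite ?evalt_ren; try tauto.
  - rewrite IHf; tauto.
  - rewrite IHf1, IHf2; tauto.
  - rewrite IHf1, IHf2; tauto.
  - rewrite IHf1, IHf2; tauto.
  - split; intros H n; specialize (H n); rewrite IHf, scons_up in *; auto.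
  - split; intros [n H]; exists n; rewrite IHf, scons_up in *; auto.
  - split; intros H n Hn; specialize (H n Hn); rewrite IHf, scons_up in *; auto.
  - split; intros [n [Hn H]]; exists n; split; auto; rewrite IHf, scons_up in *; auto.
  - split; intros H X; specialize (H X); rewrite IHf in *; auto.
  - split; intros [X H]; exists X; rewrite IHf in *; auto.
Qed.

Lemma bounded_ren f xi : bounded f -> bounded (renf xi f).
Proof. intros H; revert xi; induction H; intros xi; simpl; constructor; auto. Qed.

Definition pre {A} (n : nat) (t : nat -> A) (E : nat -> A) : nat -> A :=
  fun m => if m <? n then t m else E (m - n).
Definition snoc {A} (n : nat) (t : nat -> A) (x : A) : nat -> A :=
  fun m => if m <? n then t m else x.

Lemma pre_snoc {A} n t (x : A) E : pre n t (scons x E) = pre (S n) (snoc n t x) E.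
Proof.
  extensionality m; unfold pre, snoc.
  destruct (Nat.ltb_spec m n), (Nat.ltb_spec m (S n)); try lia; auto.
  - replace (m - n) with 0 by lia; reflexivity.
  - replace (m - n) with (S (m - S n)) by lia; reflexivity.
Qed.

Lemma pre_S {A} n t (E : nat -> A) : pre (S n) t E = pre n t (scons (t n) E).
Proof.
  rewrite pre_snoc. extensionality m; unfold pre, snoc.
  destruct (Nat.ltb_spec m (S n)), (Nat.ltb_spec m n); auto.
  f_equal; lia.
Qed.

Lemma pre_0 {A} t (E : nat -> A) : pre 0 t E = E.
Proof. extensionality m; unfold pre; simpl; f_equal; lia. Qed.

Lemma pre_ge {A} n t (E : nat -> A) k : pre n t E (k + n) = E k.
Proof. unfold pre. destruct (Nat.ltb_spec (k + n) n); [lia|]. f_equal; lia. Qed.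

Lemma pre_lt {A} n t (E : nat -> A) m : m < n -> pre n t E m = t m.
Proof. intros; unfold pre. destruct (Nat.ltb_spec m n); [auto|lia]. Qed.

Fixpoint exs n g := match n with 0 => g | S n => fex (exs n g) end.
Fixpoint alls n g := match n with 0 => g | S n => fall (alls n g) end.
Fixpoint bexs n B g := match n with 0 => g | S n => fbex (tvar B) (bexs n (S B) g) end.
Fixpoint balls n B g := match n with 0 => g | S n => fball (tvar B) (balls n (S B) g) end.

Definition bnd (M : L2model) n (t : nat -> num M) B := forall m, m < n -> lt M (t m) B.

Lemma sat_exs M n g : forall rho sg,
  sat M rho sg (exs n g) <-> exists t, sat M (pre n t rho) sg g.
Proof.
  induction n; intros rho sg; simpl.
  - split; [intros H; exists rho; rewrite pre_0; auto | intros [t H]; rewrite pre_0 in H; auto].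
  - split.
    + intros [x H]; apply IHn in H as [t H]; exists (snoc n t x); rewrite <- pre_snoc; auto.
    + intros [t H]; exists (t n); apply IHn; exists t; rewrite <- pre_S; auto.
Qed.

Lemma sat_alls M n g : forall rho sg,
  sat M rho sg (alls n g) <-> forall t, sat M (pre n t rho) sg g.
Proof.
  induction n; intros rho sg; simpl.
  - split; [intros H t; rewrite pre_0; auto | intros H; specialize (H rho); rewrite pre_0 in H; auto].
  - split.
    + intros H t; rewrite pre_S; apply (IHn (scons (t n) rho)); auto.
    + intros H x; apply IHn; intros t; rewrite pre_snoc; auto.
Qed.

Lemma bnd_snoc M n t x B : bnd M n t B -> lt M x B -> bnd M (S n) (snoc n t x) B.
Proof.
  intros H1 H2 m Hm; unfold snoc. destruct (Nat.ltb_spec m n); auto.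
Qed.

Lemma bnd_S M n t B : bnd M (S n) t B -> bnd M n t B /\ lt M (t n) B.
Proof. intros H; split; [intros m Hm; apply H; lia | apply H; lia]. Qed.

Lemma sat_bexs M n g : forall B rho sg,
  sat M rho sg (bexs n B g) <-> exists t, bnd M n t (rho B) /\ sat M (pre n t rho) sg g.
Proof.
  induction n; intros B rho sg; simpl.
  - split; [intros H; exists rho; rewrite pre_0; split; auto; intros m Hm; lia
           | intros [t [_ H]]; rewrite pre_0 in H; auto].
  - split.
    + intros [x [Hx H]]; apply IHn in H as [t [Ht H]]; simpl in Ht.
      exists (snoc n t x); split; [apply bnd_snoc; auto|]. rewrite <- pre_snoc; auto.
    + intros [t [Ht H]]; apply bnd_S in Ht as [Ht Hn]. exists (t n); split; auto.
      apply IHn; exists t; split; [simpl; auto|]. rewrite <- pre_S; auto.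
Qed.

Lemma sat_balls M n g : forall B rho sg,
  sat M rho sg (balls n B g) <-> forall t, bnd M n t (rho B) -> sat M (pre n t rho) sg g.
Proof.
  induction n; intros B rho sg; simpl.
  - split; [intros H t _; rewrite pre_0; auto
           | intros H; specialize (H rho); rewrite pre_0 in H; apply H; intros m Hm; lia].
  - split.
    + intros H t Ht; apply bnd_S in Ht as [Ht Hn]. rewrite pre_S.
      specialize (H (t n) Hn). rewrite IHn in H. apply H. simpl; auto.
    + intros H x Hx; rewrite IHn; intros t Ht; simpl in Ht. rewrite pre_snoc. apply H.
      apply bnd_snoc; auto.
Qed.

Lemma bounded_bexs n B g : bounded g -> bounded (bexs n B g).
Proof. revert B; induction n; intros B H; simpl; auto; constructor; auto. Qed.
Lemma bounded_balls n B g : bounded g -> bounded (balls n B g).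
Proof. revert B; induction n; intros B H; simpl; auto; constructor; auto. Qed.

Lemma sig1_nf f : Sigma 1 f -> exists r th, bounded th /\ f = exs r th.
Proof.
  intros H; remember 1 as k; induction H; try discriminate.
  - destruct IHSigma as [r [th [Hb ->]]]; auto. exists (S r), th; auto.
  - injection Heqk as ->. inversion H; subst. exists 0, f; auto.
Qed.

Lemma pi2_nf f : Pi 2 f -> exists q r th, bounded th /\ f = alls q (exs r th).
Proof.
  intros H; remember 2 as k; induction H; try discriminate.
  - destruct IHPi as [q [r [th [Hb ->]]]]; auto. exists (S q), r, th; auto.
  - injection Heqk as ->. apply sig1_nf in H as [r [th [Hb ->]]]. exists 0, r, th; auto.
Qed.

Lemma sig3_nf f : Sigma 3 f -> exists p q r th, bounded th /\ f = exs p (alls q (exs r th)).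
Proof.
  intros H; remember 3 as k; induction H; try discriminate.
  - destruct IHSigma as [p [q [r [th [Hb ->]]]]]; auto. exists (S p), q, r, th; auto.
  - injection Heqk as ->. apply pi2_nf in H as [q [r [th [Hb ->]]]]. exists 0, q, r, th; auto.
Qed.


Definition le (M : L2model) (x y : num M) := lt M x y \/ x = y.
Definition pairt (a b : term) := tadd (tmul (tadd a b) (tadd a b)) a.

Section Arith.
Variable M : L2model.
Hypothesis HR : RCA0 M.
Variable sg0 : nat -> set M.

Local Notation sc x := (add M x (one M)).
Local Notation z0 := (zero M).
Local Notation P := (pairM M).

Lemma ind0 (phi : form) : bounded phi -> forall rho,
  sat M (scons z0 rho) sg0 phi ->
  (forall n, sat M (scons n rho) sg0 phi -> sat M (scons (sc n) rho) sg0 phi) ->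
  forall n, sat M (scons n rho) sg0 phi.
Proof.
  intros Hb rho H0 HS n. destruct HR as [_ [HI _]].
  apply (HI phi (Sigma_Pi 0 phi (Pi_0 phi Hb)) rho sg0 H0 HS).
Qed.

Lemma add0 m : add M m z0 = m.
Proof. destruct HR as [[a1 [a2 [a3 [a4 [a5 [a6 [a7 a8]]]]]]] _]; auto. Qed.
Lemma addS m n : add M m (sc n) = sc (add M m n).
Proof. destruct HR as [[a1 [a2 [a3 [a4 [a5 [a6 [a7 a8]]]]]]] _]; auto. Qed.
Lemma mul0 m : mul M m z0 = z0.
Proof. destruct HR as [[a1 [a2 [a3 [a4 [a5 [a6 [a7 a8]]]]]]] _]; auto. Qed.
Lemma mulS m n : mul M m (sc n) = add M (mul M m n) m.
Proof. destruct HR as [[a1 [a2 [a3 [a4 [a5 [a6 [a7 a8]]]]]]] _]; auto. Qed.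
Lemma nlt0 m : ~ lt M m z0.
Proof. destruct HR as [[a1 [a2 [a3 [a4 [a5 [a6 [a7 a8]]]]]]] _]; auto. Qed.
Lemma ltS m n : lt M m (sc n) <-> lt M m n \/ m = n.
Proof. destruct HR as [[a1 [a2 [a3 [a4 [a5 [a6 [a7 a8]]]]]]] _]; auto. Qed.

Ltac I0 phi rho := let H := fresh "HI" in
  pose proof (ind0 phi ltac:(repeat constructor) rho) as H; simpl in H.

Lemma lt_sc n : lt M n (sc n).
Proof. apply ltS; auto. Qed.

Lemma lt_trans x y z : lt M x y -> lt M y z -> lt M x z.
Proof.
  I0 (fimp (flt (tvar 1) (tvar 2)) (fimp (flt (tvar 2) (tvar 0)) (flt (tvar 1) (tvar 0))))
     (scons x (scons y (fun _ => z0))).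
  apply HI.
  - intros _ C; exfalso; eapply nlt0; eauto.
  - intros n IH Hxy Hy. apply ltS in Hy as [Hy| ->]; apply ltS; auto.
Qed.

Lemma discrete m n : lt M m n -> lt M (sc m) n \/ sc m = n.
Proof.
  revert n.
  I0 (fimp (flt (tvar 1) (tvar 0)) (f_or (flt (tadd (tvar 1) tone) (tvar 0)) (feq (tadd (tvar 1) tone) (tvar 0))))
     (scons m (fun _ => z0)).
  apply HI.
  - intros C; exfalso; eapply nlt0; eauto.
  - intros n IH Hm. apply ltS in Hm as [Hm| ->].
    + left. destruct (IH Hm) as [H| <-]; apply ltS; auto.
    + right; auto.
Qed.

Lemma sc_mono m n : lt M m n -> lt M (sc m) (sc n).
Proof. intros H; destruct (discrete m n H) as [H'| <-]; apply ltS; auto. Qed.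

Lemma lt_irrefl n : ~ lt M n n.
Proof.
  revert n. I0 (fnot (flt (tvar 0) (tvar 0))) (fun _ : nat => z0).
  apply HI.
  - apply nlt0.
  - intros n IH C. apply ltS in C as [C|C].
    + apply IH. eapply lt_trans; [apply lt_sc|]; eauto.
    + apply IH. pattern n at 2; rewrite <- C. apply lt_sc.
Qed.

Lemma zero_le n : lt M z0 n \/ z0 = n.
Proof.
  revert n. I0 (f_or (flt tzero (tvar 0)) (feq tzero (tvar 0))) (fun _ : nat => z0).
  apply HI; auto.
  intros n [H|H]; left; apply ltS; auto.
Qed.

Lemma trich m n : lt M m n \/ m = n \/ lt M n m.
Proof.
  revert n.
  I0 (f_or (flt (tvar 1) (tvar 0)) (f_or (feq (tvar 1) (tvar 0)) (flt (tvar 0) (tvar 1))))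
     (scons m (fun _ => z0)).
  apply HI.
  - destruct (zero_le m) as [H|H]; auto.
  - intros n [H|[H|H]].
    + left; apply ltS; auto.
    + left; apply ltS; auto.
    + destruct (discrete n m H); auto.
Qed.

Lemma zero_or_succ n : n = z0 \/ exists m, n = sc m.
Proof.
  revert n.
  I0 (f_or (feq (tvar 0) tzero) (fbex (tvar 0) (feq (tvar 1) (tadd (tvar 0) tone)))) (fun _ : nat => z0).
  pose proof HI as H. clear HI.
  intros n. destruct (H (or_introl eq_refl) (fun k _ => or_intror (ex_intro _ k (conj (lt_sc k) eq_refl))) n)
    as [H1|[k [_ H2]]]; eauto.
Qed.

Lemma sc_inv m n : lt M (sc m) (sc n) -> lt M m n.
Proof.
  intros H. destruct (trich m n) as [H1|[H1|H1]]; auto.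
  - subst; exfalso; eapply lt_irrefl; eauto.
  - exfalso. apply (lt_irrefl (sc n)). eapply lt_trans; [apply sc_mono; eauto|]; auto.
Qed.

Lemma le_refl x : le M x x. Proof. right; auto. Qed.
Lemma lt_le x y : lt M x y -> le M x y. Proof. left; auto. Qed.
Lemma le_lt_trans x y z : le M x y -> lt M y z -> lt M x z.
Proof. intros [H| ->] H2; auto. eapply lt_trans; eauto. Qed.
Lemma lt_le_trans x y z : lt M x y -> le M y z -> lt M x z.
Proof. intros H [H2| <-]; auto. eapply lt_trans; eauto. Qed.
Lemma le_trans x y z : le M x y -> le M y z -> le M x z.
Proof. intros [H| ->] H2; auto. left; eapply lt_le_trans; eauto. Qed.
Lemma ltS_le x y : lt M x (sc y) <-> le M x y.
Proof. rewrite ltS; unfold le; tauto. Qed.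
Lemma le_sc_lt x y : le M (sc x) y -> lt M x y.
Proof. intros H; eapply lt_le_trans; [apply lt_sc|]; eauto. Qed.
Lemma lt_le_sc x y : lt M x y -> le M (sc x) y.
Proof. intros H; destruct (discrete x y H); [left|right]; auto. Qed.
Lemma not_lt_le x y : ~ lt M x y -> le M y x.
Proof. intros H; destruct (trich x y) as [?|[?|?]]; [tauto|right; auto|left; auto]. Qed.
Lemma le_not_lt x y : le M x y -> ~ lt M y x.
Proof. intros H C. apply (lt_irrefl x). eapply le_lt_trans; eauto. Qed.
Lemma le_antisym x y : le M x y -> le M y x -> x = y.
Proof. intros [H|H] H2; auto. exfalso; eapply le_not_lt; eauto. Qed.
Lemma le_zero x : le M x z0 -> x = z0.
Proof. intros [H|H]; auto. exfalso; eapply nlt0; eauto. Qed.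

Lemma upper x y : exists z, lt M x z /\ lt M y z.
Proof.
  destruct (trich x y) as [H|[H|H]].
  - exists (sc y); split; [eapply lt_trans; eauto|]; apply lt_sc.
  - subst; exists (sc y); split; apply lt_sc.
  - exists (sc x); split; [|eapply lt_trans; eauto]; apply lt_sc.
Qed.

Lemma upper_le x y : exists z, le M x z /\ le M y z.
Proof. destruct (upper x y) as [z [H1 H2]]; exists z; split; left; auto. Qed.

Lemma bnd_mono n t B B' : bnd M n t B -> le M B B' -> bnd M n t B'.
Proof. intros H HB m Hm; eapply lt_le_trans; eauto. Qed.

Lemma exists_bnd n t : exists B, bnd M n t B.
Proof.
  induction n.
  - exists z0; intros m Hm; lia.
  - destruct IHn as [B HB]. destruct (upper B (t n)) as [z [H1 H2]]. exists z.
    intros m Hm. destruct (Nat.eq_dec m n) as [->|Hne]; auto.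
    eapply lt_trans; [apply HB; lia|]; auto.
Qed.

Lemma add0l n : add M z0 n = n.
Proof.
  revert n. I0 (feq (tadd tzero (tvar 0)) (tvar 0)) (fun _ : nat => z0).
  apply HI; [apply add0|]. intros n IH. rewrite addS, IH; auto.
Qed.

Lemma addSl m n : add M (sc m) n = sc (add M m n).
Proof.
  revert n.
  I0 (feq (tadd (tadd (tvar 1) tone) (tvar 0)) (tadd (tadd (tvar 1) (tvar 0)) tone)) (scons m (fun _ => z0)).
  apply HI; [rewrite !add0; auto|]. intros n IH. rewrite !addS, IH; auto.
Qed.

Lemma add_comm m n : add M m n = add M n m.
Proof.
  revert n.
  I0 (feq (tadd (tvar 1) (tvar 0)) (tadd (tvar 0) (tvar 1))) (scons m (fun _ => z0)).
  apply HI; [rewrite add0, add0l; auto|]. intros n IH. rewrite addS, addSl, IH; auto.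
Qed.

Lemma add_assoc a b c : add M a (add M b c) = add M (add M a b) c.
Proof.
  revert c.
  I0 (feq (tadd (tvar 1) (tadd (tvar 2) (tvar 0))) (tadd (tadd (tvar 1) (tvar 2)) (tvar 0)))
     (scons a (scons b (fun _ => z0))).
  apply HI; [rewrite !add0; auto|]. intros n IH. rewrite !addS, IH; auto.
Qed.

Lemma mul0l n : mul M z0 n = z0.
Proof.
  revert n. I0 (feq (tmul tzero (tvar 0)) tzero) (fun _ : nat => z0).
  apply HI; [apply mul0|]. intros n IH. rewrite mulS, IH, add0; auto.
Qed.

Lemma mulSl m n : mul M (sc m) n = add M (mul M m n) n.
Proof.
  revert n.
  I0 (feq (tmul (tadd (tvar 1) tone) (tvar 0)) (tadd (tmul (tvar 1) (tvar 0)) (tvar 0))) (scons m (fun _ => z0)).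
  apply HI; [rewrite !mul0, add0; auto|]. intros n IH. rewrite !mulS, IH, !addS.
  f_equal. rewrite <- !add_assoc. f_equal. apply add_comm.
Qed.

Lemma mul_comm m n : mul M m n = mul M n m.
Proof.
  revert n.
  I0 (feq (tmul (tvar 1) (tvar 0)) (tmul (tvar 0) (tvar 1))) (scons m (fun _ => z0)).
  apply HI; [rewrite mul0, mul0l; auto|]. intros n IH. rewrite mulS, mulSl, IH; auto.
Qed.

Lemma lt_add_r a b c : lt M a b -> lt M (add M a c) (add M b c).
Proof.
  revert c.
  I0 (fimp (flt (tvar 1) (tvar 2)) (flt (tadd (tvar 1) (tvar 0)) (tadd (tvar 2) (tvar 0))))
     (scons a (scons b (fun _ => z0))).
  apply HI; [rewrite !add0; auto|]. intros n IH H. rewrite !addS. apply sc_mono; auto.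
Qed.

Lemma le_add a c : le M a (add M a c).
Proof.
  revert c.
  I0 (f_or (flt (tvar 1) (tadd (tvar 1) (tvar 0))) (feq (tvar 1) (tadd (tvar 1) (tvar 0))))
     (scons a (fun _ => z0)).
  pose proof HI as H; clear HI. unfold le. intros c; apply H.
  - rewrite add0; auto.
  - intros n IH. rewrite addS. left. apply ltS. destruct IH; auto.
Qed.

Lemma le_add_l a c : le M a (add M c a).
Proof. rewrite add_comm; apply le_add. Qed.

Lemma add_cancel a b c : add M a c = add M b c -> a = b.
Proof.
  intros H. destruct (trich a b) as [H1|[H1|H1]]; auto; exfalso.
  - apply (lt_add_r _ _ c) in H1. rewrite H in H1. eapply lt_irrefl; eauto.
  - apply (lt_add_r _ _ c) in H1. rewrite H in H1. eapply lt_irrefl; eauto.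
Qed.

Lemma le_add_mono a b c : le M a b -> le M (add M a c) (add M b c).
Proof. intros [H| ->]; [left; apply lt_add_r; auto|right; auto]. Qed.

Lemma mul_mono_r z x y : le M x y -> le M (mul M z x) (mul M z y).
Proof.
  revert y.
  I0 (fimp (f_or (flt (tvar 1) (tvar 0)) (feq (tvar 1) (tvar 0)))
           (f_or (flt (tmul (tvar 2) (tvar 1)) (tmul (tvar 2) (tvar 0))) (feq (tmul (tvar 2) (tvar 1)) (tmul (tvar 2) (tvar 0)))))
     (scons x (scons z (fun _ => z0))).
  pose proof HI as H; clear HI. unfold le. apply H.
  - intros H0. apply le_zero in H0. subst. right; auto.
  - intros n IH H1. fold (le M x (sc n)) in H1. fold (le M (mul M z x) (mul M z n)) in IH.
    fold (le M (mul M z x) (mul M z (sc n))).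
    destruct H1 as [H1|H1].
    + apply ltS_le in H1. eapply le_trans; [apply IH; auto|]. rewrite mulS. apply le_add.
    + subst; apply le_refl.
Qed.

Lemma n_le_sq n : le M n (mul M n n).
Proof.
  destruct (zero_or_succ n) as [->|[m ->]].
  - rewrite mul0; apply le_refl.
  - rewrite mulS. apply le_add_l.
Qed.

Lemma sq_succ s : mul M (sc s) (sc s) = sc (add M (add M (mul M s s) s) s).
Proof. rewrite mulS, mulSl, addS; auto. Qed.

Lemma mul_mono2 x y : le M x y -> le M (mul M x x) (mul M y y).
Proof.
  intros H. eapply le_trans; [apply (mul_mono_r x x y H)|].
  rewrite (mul_comm x y). apply mul_mono_r; auto.
Qed.

Lemma pair_key a s c t : le M a s -> le M c t ->
  lt M s t -> lt M (add M (mul M s s) a) (add M (mul M t t) c).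
Proof.
  intros Ha Hc Hst.
  apply lt_le_trans with (mul M t t); [|apply le_add].
  apply lt_le_trans with (mul M (sc s) (sc s)); [|apply mul_mono2, lt_le_sc; auto].
  rewrite sq_succ. apply le_lt_trans with (add M (add M (mul M s s) s) s); [|apply lt_sc].
  eapply le_trans; [|apply le_add].
  rewrite (add_comm _ a), (add_comm _ s). apply le_add_mono; auto.
Qed.

Lemma pair_inj a b c d : P a b = P c d -> a = c /\ b = d.
Proof.
  unfold pairM; intros H.
  assert (E : add M a b = add M c d).
  { destruct (trich (add M a b) (add M c d)) as [H1|[H1|H1]]; auto; exfalso.
    - apply (pair_key a _ c _ (le_add a b) (le_add c d)) in H1. rewrite H in H1. eapply lt_irrefl; eauto.
    - apply (pair_key c _ a _ (le_add c d) (le_add a b)) in H1. rewrite H in H1. eapply lt_irrefl; eauto. }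
  rewrite E in H. rewrite (add_comm _ a), (add_comm _ c) in H. apply add_cancel in H. subst.
  split; auto. rewrite (add_comm c b), (add_comm c d) in E. apply add_cancel in E; auto.
Qed.

Lemma pair_le1 a b : le M a (P a b).
Proof. apply le_add_l. Qed.
Lemma pair_le2 a b : le M b (P a b).
Proof.
  unfold pairM. eapply le_trans; [apply le_add_l with (c := a)|].
  eapply le_trans; [apply n_le_sq|]. apply le_add.
Qed.

End Arith.


Section Tools.
Variable M : L2model.
Hypothesis HR : RCA0 M.
Hypothesis B2 : BSigma 2 M.
Variable sg : nat -> set M.
Local Notation sc x := (add M x (one M)).

Definition xi1 (m : nat) := match m with 0 => 0 | S m' => S (S m') end.
Definition xi2 (m : nat) := match m with 0 => 0 | S m' => S (S (S m')) end.

Lemma LNP phi : bounded phi -> forall G e0, sat M (scons e0 G) sg phi ->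
  exists e, sat M (scons e G) sg phi /\ forall e', lt M e' e -> ~ sat M (scons e' G) sg phi.
Proof.
  intros Hb G e0 H0.
  set (Phi := fimp (fbex (tvar 0) (renf xi1 phi))
                   (fbex (tvar 0) (fand (renf xi1 phi) (fball (tvar 0) (fnot (renf xi2 phi)))))).
  assert (HP : forall n, sat M (scons n G) sg Phi <->
     ((exists e, lt M e n /\ sat M (scons e G) sg phi) ->
      exists e, lt M e n /\ sat M (scons e G) sg phi /\ forall e', lt M e' e -> ~ sat M (scons e' G) sg phi)).
  { intros n. unfold Phi. simpl. setoid_rewrite sat_ren.
    assert (E1 : forall e, (fun k => scons e (scons n G) (xi1 k)) = scons e G)
      by (intros e; extensionality k; destruct k; reflexivity).
    assert (E2 : forall e e', (fun k => scons e' (scons e (scons n G)) (xi2 k)) = scons e' G)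
      by (intros e e'; extensionality k; destruct k; reflexivity).
    setoid_rewrite E1. setoid_rewrite E2. tauto. }
  assert (Hall : forall n, sat M (scons n G) sg Phi).
  { apply (ind0 M HR sg).
    - unfold Phi; repeat constructor; apply bounded_ren; auto.
    - rewrite HP. intros [e [He _]]. exfalso; eapply (nlt0 M HR); eauto.
    - intros n IH. rewrite HP. rewrite HP in IH. intros [e [He Hs]].
      destruct (classic (exists e, lt M e n /\ sat M (scons e G) sg phi)) as [Hex|Hnex].
      + destruct (IH Hex) as [e' [H1 H2]]. exists e'; split; auto. apply (ltS M HR); auto.
      + exists n. split; [apply (lt_sc M HR)|]. apply (ltS M HR) in He as [He| He].
        * exfalso; eauto.
        * subst e. split; [exact Hs|]. intros e' He' Hs'. apply Hnex. exists e'. split; auto. }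
  destruct (proj1 (HP (sc e0)) (Hall _) (ex_intro _ e0 (conj (lt_sc M HR e0) H0))) as [e [_ He]].
  eauto.
Qed.

Definition xiT (n : nat) (m : nat) :=
  match m with 0 => n | 1 => S n | S (S m') => if m' <? n then m' else S (S m') end.

Lemma pre_at {A} n t (E : nat -> A) k m : m = k + n -> pre n t E m = E k.
Proof. intros ->; apply pre_ge. Qed.

Lemma xiT_eq n (t : nat -> num M) v S0 x G :
  (fun m => pre n t (scons v (scons S0 (scons x G))) (xiT n m)) = scons v (scons S0 (pre n t (scons x G))).
Proof.
  extensionality m. destruct m as [|[|m]]; simpl.
  - rewrite (pre_at _ _ _ 0); auto.
  - rewrite (pre_at _ _ _ 1); auto.
  - destruct (Nat.ltb_spec m n).
    + rewrite !pre_lt; auto.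
    + rewrite (pre_at _ _ _ (S (S (m - n)))) by lia. rewrite (pre_at _ _ _ (m - n)) by lia. reflexivity.
Qed.

Lemma TC phi : bounded phi ->
  (forall E v S0 S', sat M (scons v (scons S0 E)) sg phi -> le M S0 S' -> sat M (scons v (scons S' E)) sg phi) ->
  forall n G Bi, (forall t, bnd M n t (G Bi) -> exists S0, forall v, sat M (scons v (scons S0 (pre n t G))) sg phi) ->
  exists S0, forall t, bnd M n t (G Bi) -> forall v, sat M (scons v (scons S0 (pre n t G))) sg phi.
Proof.
  intros Hb Hmono n. induction n; intros G Bi H.
  - destruct (H (fun _ => zero M)) as [S0 HS]; [intros m Hm; lia|].
    exists S0; intros t _ v. rewrite pre_0 in *. apply HS.
  - set (psi := fall (balls n (S (S (S Bi))) (renf (xiT n) phi))).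
    assert (Hpsi : Sigma 2 psi).
    { apply Sigma_Pi, Pi_all, Pi_Sigma, Sigma_0. apply bounded_balls, bounded_ren; auto. }
    assert (Hsat : forall S0 x, sat M (scons S0 (scons x G)) sg psi <->
        forall v t, bnd M n t (G Bi) -> sat M (scons v (scons S0 (pre n t (scons x G)))) sg phi).
    { intros S0 x. unfold psi; simpl. setoid_rewrite sat_balls. simpl.
      setoid_rewrite sat_ren. setoid_rewrite xiT_eq. tauto. }
    destruct (B2 psi Hpsi G sg (G Bi)) as [b Hbb].
    + intros x Hx. destruct (IHn (scons x G) (S Bi)) as [S0 HS0].
      * intros t Ht. simpl in Ht. destruct (H (snoc n t x)) as [S0 HS].
        { apply bnd_snoc; auto. }
        exists S0. intros v. rewrite pre_snoc. apply HS.
      * exists S0. apply Hsat. intros v t Ht. apply HS0. simpl; auto.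
    + exists b. intros t Ht v. apply bnd_S in Ht as [Ht Htn].
      destruct (Hbb (t n) Htn) as [S0 [HS0 Hs]]. rewrite Hsat in Hs.
      rewrite pre_S. eapply Hmono; [apply Hs; auto|]. left; auto.
Qed.

End Tools.


Section Hard.
Variable M : L2model.
Hypothesis HR : RCA0 M.
Hypothesis B2 : BSigma 2 M.
Variable sg : nat -> set M.
Variables p q r : nat.
Variable th : form.
Hypothesis Hth : bounded th.
Local Notation sc x := (add M x (one M)).

Definition Rs' k s (G : nat -> num M) := lt M k (sc s) /\
  forall z, bnd M q z k -> exists w, bnd M r w s /\ sat M (pre r w (pre q z G)) sg th.
Definition Prog' s G := exists k, lt M k (sc (sc s)) /\ Rs' k (sc s) G /\ ~ Rs' k s G.
Definition Cand' e s G := e = s \/ exists t, bnd M (S p) t e /\ Prog' s (pre (S p) t G).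
Definition Gr' y s G := Cand' y s G /\ forall e, lt M e y -> ~ Cand' e s G.

Definition xiR (g : nat -> nat) m := if m <? r + q then m else r + q + g (m - (r + q)).

Lemma xiR_eq g w z (E : nat -> num M) :
  (fun m => pre r w (pre q z E) (xiR g m)) = pre r w (pre q z (fun m => E (g m))).
Proof.
  extensionality m; unfold xiR. destruct (Nat.ltb_spec m (r + q)).
  - destruct (Nat.ltb_spec m r).
    + rewrite !pre_lt; auto.
    + rewrite (pre_at r w (pre q z E) (m - r)) by lia.
      rewrite (pre_at r w (pre q z (fun m => E (g m))) (m - r)) by lia.
      rewrite !pre_lt by lia. reflexivity.
  - rewrite (pre_at r w (pre q z E) (q + g (m - (r + q)))) by lia.
    rewrite (pre_at q z E (g (m - (r + q)))) by lia.
    rewrite (pre_at r w (pre q z (fun m => E (g m))) (m - r)) by lia.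
    rewrite (pre_at q z (fun m => E (g m)) (m - r - q)) by lia.
    do 2 f_equal; lia.
Qed.

Definition RsF K S0 g := fand (flt (tvar K) (tadd (tvar S0) tone))
  (balls q K (bexs r (S0 + q) (renf (xiR g) th))).

Arguments RsF : simpl never.

Lemma sat_RsF K S0 g E : sat M E sg (RsF K S0 g) <-> Rs' (E K) (E S0) (fun m => E (g m)).
Proof.
  unfold RsF, Rs'; simpl. rewrite sat_balls. setoid_rewrite sat_bexs.
  setoid_rewrite sat_ren. setoid_rewrite xiR_eq. setoid_rewrite pre_ge. tauto.
Qed.

Lemma bRsF K S0 g : bounded (RsF K S0 g).
Proof. unfold RsF; constructor; [constructor|]. apply bounded_balls, bounded_bexs, bounded_ren; auto. Qed.

Definition ProgF S0 g :=
  fbex (tadd (tadd (tvar S0) tone) tone) (fbex (tadd (tadd (tvar (S S0)) tone) tone)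
   (fand (feq (tvar 0) (tadd (tvar (S (S S0))) tone))
     (fand (RsF 1 0 (fun m => S (S (g m)))) (fnot (RsF 1 (S (S S0)) (fun m => S (S (g m)))))))).

Arguments ProgF : simpl never.

Lemma sat_ProgF S0 g E : sat M E sg (ProgF S0 g) <-> Prog' (E S0) (fun m => E (g m)).
Proof.
  unfold ProgF, Prog'; cbn -[RsF]. setoid_rewrite sat_RsF. simpl. split.
  - intros [k [Hk [s' [Hs' [-> [H1 H2]]]]]]. exists k; auto.
  - intros [k [Hk [H1 H2]]]. exists k; split; auto. exists (sc (E S0)); split; auto.
    apply lt_sc; auto.
Qed.

Lemma bProgF S0 g : bounded (ProgF S0 g).
Proof. unfold ProgF. repeat first [apply bRsF | constructor]. Qed.

Definition gP (g : nat -> nat) m := if m <? S p then m else S p + g (m - S p).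

Lemma gP_eq t (E : nat -> num M) g :
  (fun m => pre (S p) t E (gP g m)) = pre (S p) t (fun m => E (g m)).
Proof.
  extensionality m; unfold gP. destruct (Nat.ltb_spec m (S p)).
  - rewrite !pre_lt; auto.
  - rewrite (pre_at (S p) t E (g (m - S p))) by lia.
    rewrite (pre_at (S p) t (fun m => E (g m)) (m - S p)) by lia. reflexivity.
Qed.

Definition CandF Ei S0 g := f_or (feq (tvar Ei) (tvar S0)) (bexs (S p) Ei (ProgF (S0 + S p) (gP g))).

Arguments CandF : simpl never.

Lemma sat_CandF Ei S0 g E : sat M E sg (CandF Ei S0 g) <-> Cand' (E Ei) (E S0) (fun m => E (g m)).
Proof.
  unfold CandF, Cand'; cbn -[ProgF bexs]. rewrite sat_bexs. setoid_rewrite sat_ProgF.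
  setoid_rewrite pre_ge. setoid_rewrite gP_eq. tauto.
Qed.

Lemma bCandF Ei S0 g : bounded (CandF Ei S0 g).
Proof. unfold CandF. constructor; [constructor|]. apply bounded_bexs, bProgF. Qed.

Definition GrF Y S0 g := fand (CandF Y S0 g) (fball (tvar Y) (fnot (CandF 0 (S S0) (fun m => S (g m))))).

Arguments GrF : simpl never.

Lemma sat_GrF Y S0 g E : sat M E sg (GrF Y S0 g) <-> Gr' (E Y) (E S0) (fun m => E (g m)).
Proof. unfold GrF, Gr'; cbn -[CandF]. setoid_rewrite sat_CandF. simpl. tauto. Qed.

Lemma bGrF Y S0 g : bounded (GrF Y S0 g).
Proof. unfold GrF. constructor; [apply bCandF|]. constructor; constructor; apply bCandF. Qed.

Lemma Rs_mono k s s' G : Rs' k s G -> le M s s' -> Rs' k s' G.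
Proof.
  intros [Hk Hz] Hs. split.
  - apply ltS_le; auto. eapply le_trans; eauto. apply ltS_le; auto.
  - intros z Hz'. destruct (Hz z Hz') as [w [Hw H]]. exists w; split; auto.
    eapply bnd_mono; eauto.
Qed.

Lemma Gr_exists s G : exists y, Gr' y s G.
Proof.
  assert (HC : forall e, sat M (scons e (scons s G)) sg (CandF 0 1 (fun m => S (S m))) <-> Cand' e s G).
  { intros e. rewrite sat_CandF. simpl. tauto. }
  destruct (LNP M HR sg _ (bCandF 0 1 (fun m => S (S m))) (scons s G) s) as [y [Hy Hmin]].
  - apply HC. left; auto.
  - exists y. split; [apply HC; auto|]. intros e He Hc. apply (Hmin e He). apply HC; auto.
Qed.

Lemma Gr_unique y y' s G : Gr' y s G -> Gr' y' s G -> y = y'.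
Proof.
  intros [H1 H2] [H3 H4]. destruct (trich M HR sg y y') as [H|[H|H]]; auto; exfalso.
  - eapply H4; eauto.
  - eapply H2; eauto.
Qed.

Lemma Gr_bound y s G t e0 : Gr' y s G -> bnd M (S p) t e0 -> Prog' s (pre (S p) t G) -> lt M y (sc e0).
Proof.
  intros [H1 H2] Ht Hp. apply ltS_le; auto. apply not_lt_le; auto. intros C.
  apply (H2 e0 C). right; eauto.
Qed.


Lemma sc_neq0 x : sc x <> zero M.
Proof. destruct HR as [[a1 _] _]; auto. Qed.

Definition xiA m := if m <? r then m else if m <? r + q then S (S m) else S (S (S m)).

Lemma xiA_eq w v S0 z k (Gt : nat -> num M) :
  (fun m => pre r w (scons v (scons S0 (pre q z (scons k Gt)))) (xiA m)) = pre r w (pre q z Gt).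
Proof.
  extensionality m; unfold xiA.
  destruct (Nat.ltb_spec m r); [rewrite !pre_lt; auto|].
  destruct (Nat.ltb_spec m (r + q)).
  - rewrite (pre_at r w (scons v (scons S0 (pre q z (scons k Gt)))) (S (S (m - r)))) by lia.
    rewrite (pre_at r w (pre q z Gt) (m - r)) by lia. cbn [scons]. rewrite !pre_lt by lia. reflexivity.
  - rewrite (pre_at r w (scons v (scons S0 (pre q z (scons k Gt)))) (S (S (S (m - r))))) by lia.
    rewrite (pre_at r w (pre q z Gt) (m - r)) by lia. cbn [scons].
    rewrite (pre_at q z (scons k Gt) (S (m - r - q))) by lia.
    rewrite (pre_at q z Gt (m - r - q)) by lia. reflexivity.
Qed.

Lemma xiA_indep w v S0 S1 (E : nat -> num M) :
  (fun m => pre r w (scons v (scons S0 E)) (xiA m)) = (fun m => pre r w (scons v (scons S1 E)) (xiA m)).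
Proof.
  extensionality m; unfold xiA.
  destruct (Nat.ltb_spec m r); [rewrite !pre_lt; auto|].
  destruct (Nat.ltb_spec m (r + q)).
  - rewrite (pre_at r w (scons v (scons S0 E)) (S (S (m - r)))) by lia.
    rewrite (pre_at r w (scons v (scons S1 E)) (S (S (m - r)))) by lia. reflexivity.
  - rewrite (pre_at r w (scons v (scons S0 E)) (S (S (S (m - r))))) by lia.
    rewrite (pre_at r w (scons v (scons S1 E)) (S (S (S (m - r))))) by lia. reflexivity.
Qed.

Definition phiA := bexs r 1 (renf xiA th).

Lemma sat_phiA v S0 E : sat M (scons v (scons S0 E)) sg phiA <->
  exists w, bnd M r w S0 /\ sat M (fun m => pre r w (scons v (scons S0 E)) (xiA m)) sg th.
Proof. unfold phiA. rewrite sat_bexs. setoid_rewrite sat_ren. cbn [scons]. tauto. Qed.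

Lemma Prog_io Gt : (forall z, exists w, sat M (pre r w (pre q z Gt)) sg th) ->
  forall B, exists s, lt M B s /\ Prog' s Gt.
Proof.
  intros Htrue B. set (k := sc (sc B)).
  destruct (TC M B2 sg phiA (bounded_bexs _ _ _ (bounded_ren _ _ Hth))) with (n := q) (G := scons k Gt) (Bi := 0)
    as [S0 HS0].
  - intros E v S0 S' H HS. rewrite sat_phiA in *. destruct H as [w [Hw H]]. exists w.
    split; [eapply bnd_mono; eauto|]. rewrite <- (xiA_indep w v S0 S' E); auto.
  - intros z Hz. destruct (Htrue z) as [w Hw]. destruct (exists_bnd M HR sg r w) as [W HW].
    exists W. intros v. apply sat_phiA. exists w; split; auto. rewrite xiA_eq; auto.
  - destruct (upper_le M HR sg S0 k) as [s1 [H1 H2]].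
    assert (Hs1 : Rs' k s1 Gt).
    { split; [apply ltS_le; auto|]. intros z Hz. specialize (HS0 z Hz (zero M)).
      rewrite sat_phiA in HS0. destruct HS0 as [w [Hw H]]. exists w; split; [eapply bnd_mono; eauto|].
      rewrite xiA_eq in H; auto. }
    assert (HR2 : forall s, sat M (scons s (scons k Gt)) sg (RsF 1 0 (fun m => S (S m))) <-> Rs' k s Gt).
    { intros s. rewrite sat_RsF. cbn [scons]. tauto. }
    destruct (LNP M HR sg _ (bRsF 1 0 (fun m => S (S m))) (scons k Gt) s1) as [s2 [Hs2 Hmin]];
      [apply HR2; auto|].
    apply HR2 in Hs2.
    destruct (zero_or_succ M HR sg s2) as [E0|[s0 E0]].
    + exfalso. destruct Hs2 as [Hk _]. rewrite E0 in Hk. apply ltS in Hk; auto.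
      destruct Hk as [Hk|Hk]; [eapply nlt0; eauto|]. eapply sc_neq0; eauto.
    + subst s2. exists s0. split.
      * destruct Hs2 as [Hk _]. apply ltS_le in Hk; auto. apply (le_sc_lt M HR sg) in Hk.
        apply (sc_inv M HR sg) in Hk. auto.
      * exists k. split; [exact (proj1 Hs2)|]. split; auto. intros C.
        apply (Hmin s0 (lt_sc M HR s0)). apply HR2; auto.
Qed.

Lemma Prog_fin Gt : (exists z, forall w, ~ sat M (pre r w (pre q z Gt)) sg th) ->
  exists S0, forall s, lt M S0 s -> ~ Prog' s Gt.
Proof.
  intros [z0 Hz0]. destruct (exists_bnd M HR sg q z0) as [K0 HK0].
  assert (nk : forall k s, le M K0 k -> ~ Rs' k s Gt).
  { intros k s Hk [_ H]. destruct (H z0 (bnd_mono M HR sg _ _ _ _ HK0 Hk)) as [w [_ Hw]]. eapply Hz0; eauto. }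
  set (psi := fall (f_or (fnot (RsF 2 0 (fun m => S (S (S m))))) (RsF 2 1 (fun m => S (S (S m)))))).
  assert (Hpsi : Sigma 2 psi).
  { apply Sigma_Pi, Pi_all, Pi_Sigma, Sigma_0. constructor; [constructor|]; apply bRsF. }
  assert (Hsat : forall S0 k', sat M (scons S0 (scons k' Gt)) sg psi <->
             forall s', ~ Rs' k' s' Gt \/ Rs' k' S0 Gt).
  { intros S0 k'. unfold psi; cbn -[RsF]. setoid_rewrite sat_RsF. cbn [scons]. tauto. }
  destruct (B2 psi Hpsi Gt sg K0) as [Sb HSb].
  - intros k' Hk'. destruct (classic (exists s', Rs' k' s' Gt)) as [[s' Hs']|Hn].
    + exists s'. apply Hsat. intros; right; auto.
    + exists (zero M). apply Hsat. intros s''; left; intros C; apply Hn; eauto.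
  - exists Sb. intros s Hs [k [Hk [H1 H2]]].
    destruct (classic (lt M k K0)) as [Hlt|Hnlt].
    + destruct (HSb k Hlt) as [S1 [HS1 HS]]. rewrite Hsat in HS. destruct (HS (sc s)) as [C|C]; [tauto|].
      apply H2. eapply Rs_mono; eauto. left. eapply lt_trans; eauto.
    + apply (nk k (sc s)); auto. apply not_lt_le; auto.
Qed.

Definition gF m := S (S (if m <? S p then m else S m)).

Lemma gF_eq v S0 t Mb (G : nat -> num M) :
  (fun m => scons v (scons S0 (pre (S p) t (scons Mb G))) (gF m)) = pre (S p) t G.
Proof.
  extensionality m; unfold gF. destruct (Nat.ltb_spec m (S p)); cbn [scons].
  - rewrite !pre_lt; auto.
  - rewrite (pre_at (S p) t (scons Mb G) (S (m - S p))) by lia.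
    rewrite (pre_at (S p) t G (m - S p)) by lia. reflexivity.
Qed.

Definition phiF := fimp (flt (tvar 1) (tvar 0)) (fnot (ProgF 0 gF)).

Lemma sat_phiF v S0 E : sat M (scons v (scons S0 E)) sg phiF <->
  (lt M S0 v -> ~ Prog' v (fun m => scons v (scons S0 E) (gF m))).
Proof. unfold phiF. cbn -[ProgF]. rewrite sat_ProgF. cbn [scons]. tauto. Qed.

Lemma final G Mb : (forall k, exists s, lt M k s /\ exists y, Gr' y s G /\ lt M y Mb) ->
  exists t, bnd M (S p) t Mb /\ forall z, exists w, sat M (pre r w (pre q z (pre (S p) t G))) sg th.
Proof.
  intros Hio. apply NNPP. intros Hno.
  assert (Hf : forall t, bnd M (S p) t Mb -> exists S0, forall s, lt M S0 s -> ~ Prog' s (pre (S p) t G)).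
  { intros t Ht. apply Prog_fin. apply not_all_not_ex. intros C. apply Hno. exists t. split; auto.
    intros z. specialize (C z). apply NNPP. intros C'. apply C. intros w Hw. apply C'. eauto. }
  assert (bF : bounded phiF) by (unfold phiF; repeat first [apply bProgF | constructor]).
  destruct (TC M B2 sg phiF bF) with (n := S p) (G := scons Mb G) (Bi := 0) as [Sst HSst].
  - intros E v S0 S' H HS. rewrite sat_phiF in *. intros Hlt. 
    assert (EQ : (fun m => scons v (scons S' E) (gF m)) = (fun m => scons v (scons S0 E) (gF m)))
      by (extensionality m; reflexivity).
    rewrite EQ. apply H. eapply le_lt_trans; eauto.
  - intros t Ht. cbn [scons] in Ht. destruct (Hf t Ht) as [S0 HS0]. exists S0. intros v.
    rewrite sat_phiF. rewrite gF_eq. apply HS0.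
  - destruct (upper_le M HR sg Sst Mb) as [B [HB1 HB2]]. destruct (Hio B) as [s [Hs [y [Hy Hym]]]].
    destruct Hy as [[Hys|[t [Ht Hp]]] _].
    + subst y. apply (lt_irrefl M HR sg s). apply (lt_trans M HR sg s B s); auto. apply (lt_le_trans M HR sg s Mb B); auto.
    + assert (Ht' : bnd M (S p) t Mb) by (eapply bnd_mono; eauto; left; auto).
      specialize (HSst t Ht' s). rewrite sat_phiF, gF_eq in HSst. apply HSst; auto.
      eapply le_lt_trans; eauto.
Qed.

Lemma decomp j i rho' : sat M (scons j (scons i rho')) sg (exs p (alls q (exs r th))) <->
  exists t, t p = j /\ forall z, exists w, sat M (pre r w (pre q z (pre (S p) t (scons i rho')))) sg th.
Proof.
  rewrite sat_exs. setoid_rewrite sat_alls. setoid_rewrite sat_exs. split.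
  - intros [y Hy]. exists (snoc p y j). split; [unfold snoc; rewrite Nat.ltb_irrefl; auto|].
    rewrite <- pre_snoc. auto.
  - intros [t [Htp Ht]]. exists t. rewrite <- Htp. rewrite <- pre_S. auto.
Qed.

Definition gH m := match m with 0 => 2 | S m' => S (S (S (S (S m')))) end.

Definition HF := fbex (tadd (tvar 0) tone) (fbex (tadd (tvar 1) tone) (fbex (tadd (tvar 2) tone)
  (fand (feq (tvar 3) (pairt (pairt (tvar 2) (tvar 1)) (tvar 0))) (fand (flt (tvar 2) (tvar 4)) (GrF 0 1 gH))))).

Lemma hard_core (U : uniform_bound_principle M) rho a :
  (forall i, lt M i a -> exists j, sat M (scons j (scons i rho)) sg (exs p (alls q (exs r th)))) ->
  exists b, forall i, lt M i a -> exists j, lt M j b /\ sat M (scons j (scons i rho)) sg (exs p (alls q (exs r th))).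
Proof.
  intros Hyp.
  assert (bHF : bounded HF) by (unfold HF; repeat first [apply bGrF | constructor]).
  pose proof HR as [_ [_ HD]].
  destruct (HD HF HF (Sigma_Pi 0 _ (Pi_0 _ bHF)) (Pi_Sigma 0 _ (Sigma_0 _ bHF)) (scons a rho) sg
              (fun n => iff_refl _)) as [X HX].
  assert (memchar : forall w, mem M w X <-> exists x, lt M x (sc w) /\ exists z, lt M z (sc w) /\
      exists y, lt M y (sc w) /\ w = pairM M (pairM M x z) y /\ lt M x a /\ Gr' y z (scons x rho)).
  { intros w. rewrite HX. unfold HF. cbn -[GrF]. setoid_rewrite sat_GrF.
    assert (gE : forall y z x, (fun m => scons y (scons z (scons x (scons w (scons a rho)))) (gH m)) = scons x rho)
      by (intros; extensionality m; destruct m; reflexivity).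
    setoid_rewrite gE. cbn [scons]. unfold pairM. tauto. }
  assert (memcode : forall x z y, mem M (pairM M (pairM M x z) y) X <-> lt M x a /\ Gr' y z (scons x rho)).
  { intros x z y. rewrite memchar. split.
    - intros [x' [_ [z' [_ [y' [_ [E [Hx HG]]]]]]]].
      apply (pair_inj M HR sg) in E as [E1 E2]. apply (pair_inj M HR sg) in E1 as [E3 E4]. subst. auto.
    - intros [Hx HG]. exists x; split.
      { apply (ltS_le M HR). apply (le_trans M HR sg _ (pairM M x z)); [apply (pair_le1 M HR sg x z)|]. apply (pair_le1 M HR sg). }
      exists z; split.
      { apply (ltS_le M HR). apply (le_trans M HR sg _ (pairM M x z)); [apply (pair_le2 M HR sg x z)|]. apply (pair_le1 M HR sg). }
      exists y; split; [apply (ltS_le M HR); apply (pair_le2 M HR sg)|]. auto. }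
  assert (Hfun : is_fun2 M a X).
  { split.
    - intros w Hw. rewrite memchar in Hw. destruct Hw as [x [_ [z [_ [y [_ [E [Hx _]]]]]]]].
      exists x, z, y; auto.
    - intros x z Hx. destruct (Gr_exists z (scons x rho)) as [y Hy]. exists y.
      split; [apply memcode; auto|]. intros y' Hy'. apply memcode in Hy' as [_ Hy'].
      eapply Gr_unique; eauto. }
  assert (HU : forall x, lt M x a -> exists m, inf_often_lt M X x m).
  { intros x Hx. destruct (Hyp x Hx) as [j Hj]. rewrite decomp in Hj. destruct Hj as [t [_ Ht]].
    destruct (exists_bnd M HR sg (S p) t) as [e0 He0]. exists (sc e0). intros k.
    destruct (Prog_io _ Ht k) as [s [Hks Hp]]. destruct (Gr_exists s (scons x rho)) as [y Hy].
    exists s; split; auto. exists y; split; [apply memcode; auto|]. eapply Gr_bound; eauto. }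
  destruct (U a X Hfun HU) as [Mb HMb]. exists Mb. intros i Hi.
  destruct (final (scons i rho) Mb) as [t [Ht Htrue]].
  - intros k. destruct (HMb i Hi k) as [s [Hks [y [Hy Hym]]]]. exists s; split; auto.
    exists y; split; auto. apply memcode in Hy as [_ Hy]; auto.
  - exists (t p). split; [apply Ht; lia|]. apply decomp. exists t; auto.
Qed.

End Hard.


Lemma easy_dir (M : L2model) : RCA0 M -> BSigma 3 M -> uniform_bound_principle M.
Proof.
  intros HR B3 u H Hf Hm.
  set (f := fall (fex (fex (fand (flt (tvar 2) (tvar 1))
              (fand (fmem (pairt (pairt (tvar 4) (tvar 1)) (tvar 0)) 0) (flt (tvar 0) (tvar 3))))))).
  assert (Hs : Sigma 3 f).
  { apply Sigma_Pi, Pi_all, Pi_Sigma, Sigma_ex, Sigma_ex, Sigma_Pi, Pi_0; repeat constructor. }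
  destruct (B3 f Hs (fun _ => zero M) (fun _ => H) u) as [b Hb].
  - intros i Hi. destruct (Hm i Hi) as [m Hio]. exists m. simpl. intros k.
    destruct (Hio k) as [z [Hkz [y [Hy Hy2]]]]. exists z, y. unfold pairM in Hy. auto.
  - exists b. intros x Hx k. destruct (Hb x Hx) as [j [Hj Hs']]. simpl in Hs'.
    destruct (Hs' k) as [z [y [H1 [H2 H3]]]]. exists z; split; auto. exists y; split; auto.
    eapply (lt_trans M HR (fun _ => H)); eauto.
Qed.


Theorem mainTheorem7 :
  forall M : L2model, RCA0 M -> BSigma 2 M ->
    (BSigma 3 M <-> uniform_bound_principle M).
Proof.
  intros M HR B2. split.
  - apply easy_dir; auto.
  - intros U f Hf rho sg a Hyp.
    destruct (sig3_nf f Hf) as [p [q [r [th [Hth ->]]]]].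
    eapply hard_core; eauto.
Qed.
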